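(* Let $\gamma_{sd},\gamma_{sr},\gamma_{rd}>0$ be the effective power gains of the source–destination, source–relay and relay–destination links, and let $P>0$ be a total power (spectral density). Define the direct-transmission (DT) rate $R^{DT}(P)=\log(1+\gamma_{sd}P)$ and the regenerative decode-and-forward (DF) rate \[ R^{DF}(P)=\max_{\substack{P_s,P_r\ge 0\\ \frac12 P_s+\frac12 P_r=P}}\ \min\Big\{\tfrac12\log\big(1+\gamma_{sr}P_s\big),\ \tfrac12\log\big(1+\gamma_{sd}P_s+\gamma_{rd}P_r\big)\Big\}. \] If $\gamma_{sr}<\gamma_{sd}$ or $\gamma_{rd}<\gamma_{sd}$, then $R^{DT}(P)>R^{DF}(P)$, i.e. the DT link supports a higher rate than the DF link with the same total power (the DF link is not useful).
   Context: Half-duplex regenerative (repetition-coding) decode-and-forward relaying: in the first half of the time the source transmits with power $P_s$ and the relay must decode; in the second half the relay transmits with power $P_r$, and the destination combines (maximal-ratio combining) both received signals. Powers are spectral densities and the factors $\tfrac12$ account for each node transmitting half the time; $\log$ denotes the logarithm (any fixed base). *)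

(* Defs.v *)
From mathcomp Require Import all_boot all_order all_algebra.
From mathcomp Require Import all_classical all_reals all_analysis.
Set Implicit Arguments. Unset Strict Implicit. Unset Printing Implicit Defensive.
Import Order.TTheory GRing.Theory Num.Theory.
Local Open Scope classical_set_scope.
Local Open Scope ring_scope.

Section Rates.
Variable R : realType.

Definition logb (b x : R) : R := ln x / ln b.

Definition rate_DT (b gsd P : R) : R := logb b (1 + gsd * P).

Definition df_obj (b gsd gsr grd Ps Pr : R) : R :=
  Num.min (2^-1 * logb b (1 + gsr * Ps))
          (2^-1 * logb b (1 + gsd * Ps + grd * Pr)).

Definition df_values (b gsd gsr grd P : R) : set R :=
  [set x | exists Ps Pr : R, [/\ 0 <= Ps, 0 <= Pr,
      2^-1 * Ps + 2^-1 * Pr = P & x = df_obj b gsd gsr grd Ps Pr]].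

(* regenerative DF rate: the maximum (= supremum, attained on the compact
   feasible set) of the objective over feasible splits *)
Definition rate_DF (b gsd gsr grd P : R) : R := sup (df_values b gsd gsr grd P).

End Rates.

(* Main.v *)
Require Import Defs.
From mathcomp Require Import all_boot all_order all_algebra.
From mathcomp Require Import all_classical all_reals all_analysis.
From mathcomp Require Import ring lra.
Import Order.TTheory GRing.Theory Num.Theory.
Local Open Scope ring_scope.

Lemma logb_le (R : realType) (b x y : R) : 1 < b -> 0 < x -> x <= y ->
  logb b x <= logb b y.
Proof.
move=> hb hx hxy; rewrite /logb; apply: ler_wpM2r.
  by rewrite invr_ge0 ltW // ln_gt0.
have hy : 0 < y by apply: lt_le_trans hxy.
by rewrite ler_ln ?posrE.
Qed.

Theorem proposition1 (R : realType) (b gsd gsr grd P : R)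
  (hb : 1 < b) (hsd : 0 < gsd) (hsr : 0 < gsr) (hrd : 0 < grd) (hP : 0 < P)
  (hcond : gsr < gsd \/ grd < gsd) :
  rate_DF b gsd gsr grd P < rate_DT b gsd P.
Proof.
set M := 2^-1 * logb b (1 + 2 * gsd * P).
apply: (@le_lt_trans _ _ M).
  apply: ge_sup.
    exists (df_obj b gsd gsr grd (2 * P) 0); exists (2 * P), 0; split => //.
    - lra.
    - lra.
  move=> x [Ps [Pr [hPs hPr hsum ->]]].
  have hs : Ps + Pr = 2 * P by rewrite -hsum; field.
  have hPs2 : Ps <= 2 * P by rewrite -hs lerDl.
  rewrite /df_obj /M; case: hcond => h.
  - rewrite ge_min; apply/orP; left.
    apply: ler_wpM2l; first by rewrite invr_ge0.
    apply: logb_le => //; first by nra.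
    rewrite lerD2l; nra.
  - rewrite ge_min; apply/orP; right.
    apply: ler_wpM2l; first by rewrite invr_ge0.
    apply: logb_le => //.
      by nra.
    nra.
rewrite /M /rate_DT /logb.
have hL : 0 < ln b by rewrite ln_gt0.
rewrite mulrA ltr_pM2r ?invr_gt0 //.
have h1 : 0 < 1 + gsd * P by nra.
have h2 : 0 < 1 + 2 * gsd * P by nra.
have -> : ln (1 + gsd * P) = 2^-1 * ln ((1 + gsd * P) ^+ 2).
  by rewrite lnXn // mulr2n; field.
rewrite ltr_pM2l ?invr_gt0 // ltr_ln ?posrE ?exprn_gt0 //.
have hq : 0 < gsd * P by nra.
nra.
Qed.
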